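(* Let $p$ be a prime and let $G$ be a $2$-tuple regular finite group of exponent $p^s$ for some $s\in\mathbb{N}$. For every $i\in\{0,\ldots,s\}$, every element of $\Omega_i(G)$ has order at most $p^i$ and is a $p^{s-i}$-th power of an element of $G$. In particular, $\Omega_i(G)$ is $2$-tuple regular.
   Context: $\Omega_i(G)$ is the subgroup generated by all elements of order dividing $p^i$. A finite group $G$ is $2$-tuple regular if for all pairs $(g_1,g_2),(h_1,h_2)\in G^2$ (entries may coincide) for which $g_1\mapsto h_1,g_2\mapsto h_2$ defines an isomorphism $\langle g_1,g_2\rangle\to\langle h_1,h_2\rangle$, there is a bijection $\Psi\colon G\to G$ such that for every $g\in G$ the assignment $g_1\mapsto h_1,g_2\mapsto h_2,g\mapsto\Psi(g)$ defines an isomorphism $\langle g_1,g_2,g\rangle\to\langle h_1,h_2,\Psi(g)\rangle$. *)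

(* Defs.v *)
From mathcomp Require Import all_boot all_fingroup all_solvable.
Set Implicit Arguments. Unset Strict Implicit. Unset Printing Implicit Defensive.
Local Open Scope group_scope.

Definition Omega (gT : finGroupType) (p i : nat) (G : {set gT}) : {set gT} :=
  <<[set x in G | x ^+ (p ^ i) == 1]>>.

(* "x_k |-> y_k (k < size xs) defines an isomorphism
    <x_1,...,x_n> -> <y_1,...,y_n>": there is a map f that is an injective
   homomorphism on <xs>, with image <ys>, sending each x_k to y_k. *)
Definition assign_iso (gT : finGroupType) (xs ys : seq gT) : Prop :=
  size xs = size ys /\
  exists f : gT -> gT,
    [/\ {in <<[set x in xs]>> &, {morph f : x y / x * y}},
        {in <<[set x in xs]>> &, injective f},
        f @: <<[set x in xs]>> = <<[set y in ys]>> &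
        forall k, k < size xs -> f (nth 1 xs k) = nth 1 ys k].

Definition tuple2_regular (gT : finGroupType) (G : {set gT}) : Prop :=
  forall g1 g2 h1 h2 : gT,
    g1 \in G -> g2 \in G -> h1 \in G -> h2 \in G ->
    assign_iso [:: g1; g2] [:: h1; h2] ->
    exists Psi : gT -> gT,
      [/\ {in G, forall g, Psi g \in G},
          {in G &, injective Psi},
          Psi @: G = G &
          forall g, g \in G -> assign_iso [:: g1; g2; g] [:: h1; h2; Psi g]].

(* Main.v *)
Require Import Defs.
From mathcomp Require Import all_boot all_fingroup all_solvable.
Set Implicit Arguments. Unset Strict Implicit. Unset Printing Implicit Defensive.
Local Open Scope group_scope.

Section Aux.
Variables (gT : finGroupType) (G : {group gT}) (p s : nat).
Hypotheses (pp : prime p) (expG : exponent G = (p ^ s)%N) (reg : tuple2_regular G).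

Definition Sk k := [set x in G | x ^+ (p ^ k) == 1].

Lemma same_order_iso (x y : gT) : #[x] = #[y] -> assign_iso [:: x; x] [:: y; y].
Proof.
move=> oxy; have dyx : #[y] %| #[x] by rewrite oxy.
have E a : <<[set z in [:: a; a]]>> = <[a]>.
  by congr <<_>>; apply/setP=> z; rewrite !inE orbb.
split=> //; exists (eltm dyx); rewrite E; split.
- exact: eltmM.
- have: 'injm (eltm dyx) by rewrite injm_eltm oxy dvdnn.
  by move/injmP.
- by have := im_eltm dyx; rewrite morphimEdom E.
- by case=> [|[|]] //= _; rewrite eltm_id.
Qed.

Lemma memD3 (a b c : gT) : [/\ a \in <<[set z in [:: a; b; c]]>>,
   b \in <<[set z in [:: a; b; c]]>> & c \in <<[set z in [:: a; b; c]]>>].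
Proof. by split; apply: mem_gen; rewrite inE !inE eqxx ?orbT. Qed.

Lemma transfer x y h : x \in G -> y \in G -> #[x] = #[y] -> h \in G ->
  exists2 g, g \in G & exists f : {morphism <<[set z in [:: x; x; g]]>> >-> gT},
    [/\ {in <<[set z in [:: x; x; g]]>> &, injective f}, f x = y & f g = h].
Proof.
move=> Gx Gy oxy Gh.
have [Psi [PG PI PIm Hiso]] := reg Gx Gx Gy Gy (same_order_iso oxy).
have: h \in Psi @: G by rewrite PIm.
case/imsetP=> g Gg ->; exists g => //.
have [_ [f [M I _ Hk]]] := Hiso g Gg.
exists (Morphism M); split; [exact: I | exact: (Hk 0%N isT) | exact: (Hk 2%N isT)].
Qed.

Lemma pG : p.-group G.
Proof. by rewrite -pnat_exponent expG pnatX pnat_id. Qed.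

Lemma max_elt : exists2 c, c \in G & #[c] = (p ^ s)%N.
Proof.
have [c Gc oc] := exponent_witness (pgroup_nil pG).
by exists c; rewrite // -oc.
Qed.

Lemma ord_exact (x : gT) k : x ^+ (p ^ k.+1) = 1 -> x ^+ (p ^ k) != 1 ->
  #[x] = (p ^ k.+1)%N.
Proof.
move=> /eqP H ne1; rewrite -order_dvdn in H; rewrite -order_dvdn in ne1.
have [m lem Ex] := elimT (dvdn_pfactor _ _ pp) H; rewrite Ex in ne1 *.
case: (ltngtP m k.+1) lem => [ltm _|//|-> //].
by move: ne1; rewrite dvdn_exp2l.
Qed.

Lemma S_closed k : k <= s -> {in Sk k &, forall x y, x * y \in Sk k}.
Proof.
elim: k => [|k IH] leks.
  move=> x y; rewrite !inE expn0 !expg1 => /andP[Gx /eqP->] /andP[Gy /eqP->].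
  by rewrite mulg1 group1 eqxx.
have {IH} IH := IH (ltnW leks).
have gsS : group_set (Sk k).
  by apply/group_setP; split; [rewrite inE group1 expg1n eqxx | exact: IH].
pose N := Group gsS.
have memN x : (x \in N) = (x \in G) && (x ^+ (p ^ k) == 1) by rewrite inE.
have nNG : G \subset 'N(N).
  apply/subsetP=> a Ga; rewrite inE; apply/subsetP=> z.
  by rewrite mem_conjg !memN groupJr ?groupV // -conjXg conjg_eq1.
have [c Gc oc] := max_elt.
have cN : c \notin N.
  rewrite memN Gc /= -order_dvdn oc; apply/negP => /dvdn_leq.
  rewrite expn_gt0 prime_gt0 // leq_exp2l ?prime_gt1 // => /(_ isT) lesk.
  by move: leks; rewrite ltnNge lesk.
pose Q := G / N.
have ntQ : Q != 1.
  apply/trivgPn; exists (coset N c); first exact: mem_quotient.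
  apply: contra cN => /eqP; apply: coset_idr; exact: (subsetP nNG).
have pQ : p.-group Q := quotient_pgroup _ pG.
have ntZ : 'Z(Q) != 1 by rewrite center_nil_eq1 ?(pgroup_nil pQ).
have pZ := pgroupS (center_sub Q) pQ.
have [_ pdZ _] := pgroup_pdiv pZ ntZ.
have [ub Zub oub] := Cauchy pp pdZ.
have Qub : ub \in Q := subsetP (center_sub Q) _ Zub.
case/morphimP: Qub => u Nu Gu def_ub.
have upN : u ^+ p \in N.
  apply: coset_idr; first by rewrite groupX.
  by rewrite morphX // -def_ub -oub expg_order.
have uN : u \notin N.
  apply/negP=> /coset_id; rewrite -def_ub => ub1.
  by move: oub; rewrite ub1 order1 => p1; move: pp; rewrite -p1.
have ou : #[u] = (p ^ k.+1)%N.
  apply: ord_exact; last by move: uN; rewrite memN Gu.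
  by move: upN; rewrite memN => /andP[_ /eqP]; rewrite -expgM -expnS.
have centu h : h \in G -> [~ u, h] \in N.
  move=> Gh; have Nh := subsetP nNG _ Gh.
  apply: coset_idr; first by rewrite groupR.
  rewrite morphR // -def_ub; apply/eqP/commgP.
  by case/centerP: Zub => _; apply; apply: mem_quotient.
have centx x h : x \in Sk k.+1 -> h \in G -> commute (coset N x) (coset N h).
  move=> Sx Gh; move: Sx; rewrite inE => /andP[Gx xp].
  have Nx := subsetP nNG _ Gx; have Nh := subsetP nNG _ Gh.
  case xN : (x \in N).
    by rewrite coset_id //; apply: commute_sym; exact: commute1.
  have ox : #[u] = #[x].
    by rewrite ou; symmetry; apply: ord_exact; [exact/eqP | by rewrite memN Gx /= in xN; rewrite xN].
  have [g Gg [f [_ fu fg]]] := transfer Gu Gx ox Gh.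
  have [Du _ Dg] := memD3 u u g.
  apply/commgP; rewrite -morphR //; apply/eqP; apply: coset_id.
  rewrite memN groupR //= -fu -fg -morphR // -morphX ?groupR //.
  by have := centu g Gg; rewrite memN => /andP[_ /eqP->]; rewrite morph1.
move=> x y Sx Sy; have := Sx; have := Sy; rewrite !inE => /andP[Gy _] /andP[Gx _].
rewrite groupM //= expnS expgM.
have Nx := subsetP nNG _ Gx; have Ny := subsetP nNG _ Gy.
have xyN : (x * y) ^+ p \in N.
  apply: coset_idr; first by rewrite groupX ?groupM.
  rewrite morphX ?groupM // morphM // expgMn; last exact: centx.
  have pw z : z \in Sk k.+1 -> coset_morphism N (z ^+ p) = 1.
    rewrite inE => /andP[Gz /eqP zp]; apply: coset_id.
    by rewrite memN groupX //= -expgM -expnS zp.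
  by rewrite -!morphX // pw // pw // mulg1.
by move: xyN; rewrite memN => /andP[_].
Qed.

End Aux.

Theorem lemma4p5 (gT : finGroupType) (G : {group gT}) (p s : nat) :
  prime p -> exponent G = (p ^ s)%N -> tuple2_regular G ->
  forall i : nat, (i <= s)%N ->
    (forall x, x \in Omega p i G ->
       (#[x] <= p ^ i)%N /\ exists2 y, y \in G & x = y ^+ (p ^ (s - i))) /\
    tuple2_regular (Omega p i G).
Proof.
move=> pp expG reg i leis.
have gsS : group_set (Sk G p i).
  apply/group_setP; split; first by rewrite inE group1 expg1n eqxx.
  exact: (S_closed pp expG reg leis).
have OmE : Omega p i G = Sk G p i by rewrite /Omega gen_set_id.
rewrite OmE; split.
  move=> x; rewrite inE => /andP[Gx /eqP xp].
  have dx : #[x] %| p ^ i by rewrite order_dvdn xp.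
  split; first by apply: dvdn_leq; rewrite ?expn_gt0 ?prime_gt0.
  have [j lej ox] := elimT (dvdn_pfactor _ _ pp) dx.
  have [c Gc oc] := max_elt pp expG.
  have ljs : j <= s := leq_trans lej leis.
  have oy : #[x] = #[c ^+ (p ^ (s - j))].
    rewrite orderXdiv oc ?dvdn_exp2l ?leq_subr // -expnB ?prime_gt0 ?leq_subr //.
    by rewrite subKn.
  have [g Gg [f [fI fx fg]]] := transfer reg Gx (groupX _ Gc) oy Gc.
  have [Dx _ Dg] := memD3 x x g.
  exists (g ^+ (p ^ (i - j))); first exact: groupX.
  rewrite -expgM -expnD.
  have -> : (i - j + (s - i) = s - j)%N.
    by rewrite addnBAC // subnKC.
  apply: fI => //; first exact: groupX.
  by rewrite fx morphX // fg.
move=> g1 g2 h1 h2; rewrite !inE.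
move=> /andP[G1 _] /andP[G2 _] /andP[H1 _] /andP[H2 _] iso12.
have [Psi [PG PI PIm Hiso]] := reg _ _ _ _ G1 G2 H1 H2 iso12.
have mapS g : g \in Sk G p i -> Psi g \in Sk G p i.
  rewrite !inE => /andP[Gg /eqP gp]; rewrite PG //=.
  have [_ [f [M _ _ Hk]]] := Hiso g Gg.
  have [_ _ Dg] := memD3 g1 g2 g.
  have fg : f g = Psi g := Hk 2%N isT.
  by rewrite -fg -(morphX (Morphism M)) //= gp; apply/eqP; exact: (morph1 (Morphism M)).
have PIS : {in Sk G p i &, injective Psi}.
  move=> a b; rewrite !inE => /andP[Ga _] /andP[Gb _]; exact: PI.
exists Psi; split => //.
- apply/eqP; rewrite eqEcard card_in_imset // leqnn andbT.
  by apply/subsetP=> _ /imsetP[g Sg ->]; exact: mapS.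
- by move=> g; rewrite inE => /andP[Gg _]; exact: Hiso.
Qed.
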